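(* Suppose there is a norm $\|\cdot\|$ on $\mathbb R^n$ and constants $q\in(1,2]$, $L>0$ such that $f$ is $q$-uniformly smooth on $\mathrm{dom}(\Psi)$ with constant $L$, and let $p\ge2$, $\mu>0$. (a) If $\Psi$ is $p$-uniformly convex on $\mathrm{dom}(\Psi)$ with constant $\mu$, then $(\mathcal D,\mathrm{gap})$ satisfies the $(q,r)$-growth property with $r=q/p$ and $M=L(p/\mu)^{q/p}$. (b) If $\Psi=\delta_C$ for a closed convex set $C\subseteq\mathbb R^n$ that is $p$-uniformly convex with constant $\mu$, and $\ell:=\inf_{x\in C}\|\nabla f(x)\|^*>0$, then $(\mathcal D,\mathrm{gap})$ satisfies the $(q,r)$-growth property with $r=q/p$ and $M=L(p/(\ell\mu))^{q/p}$.
   Context: Let $f,\Psi:\mathbb{R}^n\to\mathbb{R}\cup\{\infty\}$ be closed proper convex functions such that (A1) $f$ is differentiable on $\mathrm{dom}(\Psi)$, and (A2) for every $x\in\mathrm{dom}(f)$ the set $\arg\min_s\{\langle\nabla f(x),s\rangle+\Psi(s)\}$ is nonempty. $f^*,\Psi^*$ denote convex conjugates; $\arg\min_y\{\langle g,y\rangle+\Psi(y)\}=\partial\Psi^*(-g)$. $D_f(y,x)=f(y)-f(x)-\langle\nabla f(x),y-x\rangle$. $\mathrm{gap}(x,u)=f(x)+\Psi(x)+f^*(u)+\Psi^*(-u)$. $\mathcal{D}(x,s,\theta)=D_f(x+\theta(s-x),x)+\Psi(x+\theta(s-x))-(1-\theta)\Psi(x)-\theta\Psi(s)$. $\|\cdot\|^*$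 is the dual norm. $(q,r)$-growth property: there is a finite $M>0$ such that for all $x\in\mathrm{dom}(\Psi)$, $g=\nabla f(x)$, $s\in\partial\Psi^*(-g)$: $\mathcal D(x,s,\theta)\le\frac{M\theta^q}{q}\mathrm{gap}(x,g)^r$ for all $\theta\in[0,1]$. $f$ is $q$-uniformly smooth on $C$ with constant $L$ if for all $x,y\in C$, $\theta\in[0,1]$: $f(x+\theta(y-x))\ge(1-\theta)f(x)+\theta f(y)-\frac Lq\theta(1-\theta)\|y-x\|^q$. $\Psi$ is $p$-uniformly convex on $C$ with constant $\mu$ if for all $x,y\in C$, $\theta\in[0,1]$: $\Psi(x+\theta(y-x))\le(1-\theta)\Psi(x)+\theta\Psi(y)-\frac\mu p\theta(1-\theta)\|y-x\|^p$. A closed convex set $C$ is $p$-uniformly convex with constant $\mu$ if for all $x,y\in C$, $\theta\in[0,1]$ and $\|z\|\le1$: $x+\theta(y-x)+\frac\mu p\theta(1-\theta)\|y-x\|^pz\in C$. *)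

(* Defs.v *)
From HB Require Import structures.
From mathcomp Require Import all_boot all_order all_algebra.
From mathcomp Require Import all_classical all_reals all_analysis.
Set Implicit Arguments. Unset Strict Implicit. Unset Printing Implicit Defensive.
Import Order.TTheory GRing.Theory Num.Theory.
Import numFieldNormedType.Exports.
Local Open Scope classical_set_scope.
Local Open Scope ring_scope.

Section Defs.
Variables (R : realType) (n : nat).
Notation vec := 'rV[R]_n.

Definition dot (u v : vec) : R := \sum_(i < n) u 0 i * v 0 i.

Definition is_norm (nrm : vec -> R) : Prop :=
  (forall x, nrm x = 0 -> x = 0) /\
  (forall (a : R) x, nrm (a *: x) = `|a| * nrm x) /\
  (forall x y, nrm (x + y) <= nrm x + nrm y).

Definition dual_norm (nrm : vec -> R) (g : vec) : R :=
  sup [set dot g x | x in [set x | nrm x <= 1]].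

Definition dom (h : vec -> \bar R) : set vec := [set x | (h x < +oo)%E].

Definition convex_fun (h : vec -> \bar R) : Prop :=
  forall (x y : vec) (t : R), 0 <= t <= 1 ->
    (h (x + t *: (y - x))%R <= (1 - t)%:E * h x + t%:E * h y)%E.

Definition proper_fun (h : vec -> \bar R) : Prop :=
  (forall x, h x != -oo%E) /\ exists x, (h x < +oo)%E.

(* closed = lower semicontinuous *)
Definition closed_fun (h : vec -> \bar R) : Prop :=
  forall x (a : R), (a%:E < h x)%E -> \forall y \near x, (a%:E < h y)%E.

Definition closed_proper_convex (h : vec -> \bar R) : Prop :=
  closed_fun h /\ proper_fun h /\ convex_fun h.

Definition is_gradient (h : vec -> \bar R) (x g : vec) : Prop :=
  (\forall y \near x, h y \is a fin_num) /\
  forall e : R, 0 < e -> \forall d \near (0 : vec),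
    `| fine (h (x + d)%R) - fine (h x) - dot g d | <= e * `|d|.

Definition conj (h : vec -> \bar R) (u : vec) : \bar R :=
  ereal_sup [set ((dot u x)%:E - h x)%E | x in [set: vec]].

(* arg min_s { <g,s> + Psi(s) }  ( = \partial Psi^*(-g) ) *)
Definition lmo (Psi : vec -> \bar R) (g : vec) : set vec :=
  [set s | (Psi s < +oo)%E /\
     forall y, ((dot g s)%:E + Psi s <= (dot g y)%:E + Psi y)%E].

Definition bregman (f : vec -> \bar R) (gradf : vec -> vec) (y x : vec) : \bar R :=
  (f y - f x - (dot (gradf x) (y - x)%R)%:E)%E.

Definition gap (f Psi : vec -> \bar R) (x u : vec) : \bar R :=
  (f x + Psi x + conj f u + conj Psi (- u)%R)%E.

Definition Dcal (f Psi : vec -> \bar R) (gradf : vec -> vec) (x s : vec) (t : R)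
  : \bar R :=
  (bregman f gradf (x + t *: (s - x))%R x + Psi (x + t *: (s - x))%R
     - (1 - t)%:E * Psi x - t%:E * Psi s)%E.

Definition growth_property (f Psi : vec -> \bar R) (gradf : vec -> vec)
  (q r M : R) : Prop :=
  forall x, dom Psi x -> forall s, lmo Psi (gradf x) s ->
    forall t : R, 0 <= t <= 1 ->
      (Dcal f Psi gradf x s t <=
         (M * t `^ q / q)%:E * (gap f Psi x (gradf x)) `^ r)%E.

Definition unif_smooth (nrm : vec -> R) (f : vec -> \bar R) (C : set vec)
  (q L : R) : Prop :=
  forall x y : vec, C x -> C y -> forall t : R, 0 <= t <= 1 ->
    (f (x + t *: (y - x))%R >=
      (1 - t)%:E * f x + t%:E * f y - (L / q * t * (1 - t) * nrm (y - x)%R `^ q)%:E)%E.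

Definition unif_convex_fun (nrm : vec -> R) (Psi : vec -> \bar R) (C : set vec)
  (p mu : R) : Prop :=
  forall x y : vec, C x -> C y -> forall t : R, 0 <= t <= 1 ->
    (Psi (x + t *: (y - x))%R <=
      (1 - t)%:E * Psi x + t%:E * Psi y - (mu / p * t * (1 - t) * nrm (y - x)%R `^ p)%:E)%E.

Definition cvx_set (C : set vec) : Prop :=
  forall (x y : vec) (t : R), C x -> C y -> 0 <= t <= 1 -> C (x + t *: (y - x)).

Definition unif_convex_set (nrm : vec -> R) (C : set vec) (p mu : R) : Prop :=
  forall (x y : vec) (t : R) z, C x -> C y -> 0 <= t <= 1 -> nrm z <= 1 ->
    C (x + t *: (y - x) + (mu / p * t * (1 - t) * nrm (y - x)%R `^ p) *: z).

Definition delta_ind (C : set vec) (x : vec) : \bar R :=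
  if x \in C then 0%E else +oo%E.

End Defs.

(* Main.v *)
Require Import Defs.
From HB Require Import structures.
From mathcomp Require Import all_boot all_order all_algebra.
From mathcomp Require Import all_classical all_reals all_analysis.
From mathcomp Require Import ring lra.
Import Order.TTheory GRing.Theory Num.Theory.
Import numFieldNormedType.Exports.
Local Open Scope classical_set_scope.
Local Open Scope ring_scope.

Set Implicit Arguments. Unset Strict Implicit.


Lemma dotD (R : realType) n (g u v : 'rV[R]_n) : dot g (u + v) = dot g u + dot g v.
Proof. by rewrite /dot -big_split; apply: eq_bigr => i _; rewrite mxE mulrDr. Qed.

Lemma dotZ (R : realType) n (g u : 'rV[R]_n) c : dot g (c *: u) = c * dot g u.
Proof. by rewrite /dot mulr_sumr; apply: eq_bigr => i _; rewrite mxE mulrCA. Qed.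

Lemma dotN (R : realType) n (g u : 'rV[R]_n) : dot g (- u) = - dot g u.
Proof. by rewrite -scaleN1r dotZ mulN1r. Qed.

Lemma dotB (R : realType) n (g u v : 'rV[R]_n) : dot g (u - v) = dot g u - dot g v.
Proof. by rewrite dotD dotN. Qed.

Lemma dotNl (R : realType) n (g u : 'rV[R]_n) : dot (- g) u = - dot g u.
Proof. by rewrite /dot -sumrN; apply: eq_bigr => i _; rewrite mxE mulNr. Qed.

Lemma nrm0 (R : realType) n (nrm : 'rV[R]_n -> R) : is_norm nrm -> nrm 0 = 0.
Proof. by move=> [_ [hZ _]]; rewrite -(scale0r (0 : 'rV[R]_n)) hZ normr0 mul0r. Qed.

Lemma nrmN (R : realType) n (nrm : 'rV[R]_n -> R) x : is_norm nrm -> nrm (- x) = nrm x.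
Proof. by move=> [_ [hZ _]]; rewrite -scaleN1r hZ normrN normr1 mul1r. Qed.

Lemma nrm_ge0 (R : realType) n (nrm : 'rV[R]_n -> R) x : is_norm nrm -> 0 <= nrm x.
Proof.
move=> hn; have := hn.2.2 x (- x); rewrite subrr nrm0 // nrmN //.
by move=> h; lra.
Qed.

Lemma nrmZ (R : realType) n (nrm : 'rV[R]_n -> R) x c : is_norm nrm -> 0 <= c ->
  nrm (c *: x) = c * nrm x.
Proof. by move=> [_ [hZ _]] c0; rewrite hZ ger0_norm. Qed.

Lemma lim1 (R : realType) (a b : R) :
  (forall t, 0 < t < 1 -> (1 - t) * b <= a) -> b <= a.
Proof.
move=> H; case: (lerP b a) => // hab.
set d := b - a.
have d0 : 0 < d by rewrite /d subr_gt0.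
have hb0 : 0 <= `|b| by [].
have den : 0 < 2 * (`|b| + d) by lra.
set t := d / (2 * (`|b| + d)).
have t0 : 0 < t by rewrite /t divr_gt0.
have ht : t * (2 * (`|b| + d)) = d by rewrite /t mulfVK // gt_eqF.
have t1 : t < 1.
  have : t * (2 * (`|b| + d)) < 1 * (2 * (`|b| + d)) by rewrite ht; lra.
  by rewrite ltr_pM2r.
have := H t; rewrite t0 t1 => /(_ isT) h.
have hb1 : b <= `|b| := ler_norm b.
have e1 : t * b <= t * `|b| by rewrite ler_pM2l.
have e2 : t * `|b| < t * (2 * (`|b| + d)) by rewrite ltr_pM2l //; lra.
have : (1 - t) * b = b - t * b by ring.
rewrite /d in ht e2; lra.
Qed.

Lemma fin_real (R : realType) (h : \bar R) : h != -oo%E -> (h < +oo)%E -> h = (fine h)%:E.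
Proof. by case: h. Qed.

Lemma breg_le (R : realType) n (f Psi : 'rV[R]_n -> \bar R) gradf
  (nrm : 'rV[R]_n -> R) (q L : R) (hnrm : is_norm nrm)
  (hfc : convex_fun f) (A1 : forall x, dom Psi x -> is_gradient f x (gradf x))
  (hLq : 0 <= L / q) (hsmooth : unif_smooth nrm f (dom Psi) q L) x y :
  dom Psi x -> dom Psi y ->
  fine (f y) - fine (f x) - dot (gradf x) (y - x) <= L / q * nrm (y - x) `^ q.
Proof.
move=> hx hy.
have [gx_near gx] := A1 x hx.
have [gy_near _] := A1 y hy.
have fxf : f x \is a fin_num := nbhs_singleton gx_near.
have fyf : f y \is a fin_num := nbhs_singleton gy_near.
set fx := fine (f x). set fy := fine (f y). set d := y - x. set g := gradf x.
have Efx : f x = fx%:E by rewrite /fx fineK.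
have Efy : f y = fy%:E by rewrite /fy fineK.
set K := L / q * nrm d `^ q.
have K0 : 0 <= K by rewrite /K mulr_ge0 // powR_ge0.
apply/ler_addgt0Pr => e e0.
have nd0 : 0 <= `|d| by [].
have c0 : 0 < e / (`|d| + 1) by rewrite divr_gt0 //; lra.
have /nbhs_norm0P [r /= r0 Hr] := gx _ c0.
set r' := r / (`|d| + 1).
have r'0 : 0 < r' by rewrite divr_gt0 //; lra.
have hr' : r' * (`|d| + 1) = r by rewrite /r' mulfVK //; apply/lt0r_neq0; lra.
set th := r' / (r' + 1).
have th0 : 0 < th by rewrite divr_gt0 //; lra.
have hth : th * (r' + 1) = r' by rewrite /th mulfVK //; apply/lt0r_neq0; lra.
have th1 : th < 1 by nra.
have thr : th <= r' by nra.
have hsmall : `|th *: d| < r.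
  rewrite normrZ gtr0_norm //; nra.
have := Hr _ hsmall.
have hs := hsmooth x y hx hy th.
rewrite (ltW th0) (ltW th1) in hs; have {}hs := hs isT.
have hc := hfc x y th.
rewrite (ltW th0) (ltW th1) in hc; have {}hc := hc isT.
rewrite Efx Efy -!EFinM -!EFinD in hs; rewrite Efx Efy -!EFinM -!EFinD in hc.
move: hs hc; rewrite -/d; case Ez: (f (x + th *: d)) => [u| |] hs hc //=.
rewrite !lee_fin in hs hc.
rewrite dotZ normrZ gtr0_norm // => H.
set c := e / (`|d| + 1) in H c0.
have hc1 : c * (`|d| + 1) = e by rewrite /c mulfVK //; apply/lt0r_neq0; lra.
have E1 : c * (th * `|d|) <= th * e by nra.
have E2 : L / q * th * (1 - th) * nrm d `^ q = th * K - th * th * K by rewrite /K; ring.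
have E3 : 0 <= th * th * K by rewrite mulr_ge0 // mulr_ge0 // ltW.
have H' := ler_norm (u - fx - th * dot g d).
have : th * (fy - fx - dot g d) <= th * (K + e).
  rewrite /d E2 in hs *; lra.
by rewrite ler_pM2l.
Qed.

Lemma final_step (R : realType) (D gp : \bar R) (L q p k t N : R) :
  0 < L -> 1 < q -> 0 < p -> 0 < k -> 0 <= t -> 0 <= N ->
  (D <= (L / q * (t * N) `^ q)%:E)%E -> ((k / p * N `^ p)%:E <= gp)%E ->
  (D <= (L * (p / k) `^ (q / p) * t `^ q / q)%:E * gp `^ (q / p))%E.
Proof.
move=> L0 q1 p0 k0 t0 N0 hD hg.
have qp0 : q / p != 0 by apply/lt0r_neq0; rewrite divr_gt0 //; lra.
rewrite powRM // in hD.
have [tz|tp] := eqVneq t 0.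
  subst t; rewrite powR0 ?mulr0 ?mul0r ?mul0e in hD *; last by apply/lt0r_neq0; lra.
  by rewrite mulr0 in hD.
have tq : 0 < t `^ q by rewrite powR_gt0 // lt0r tp.
have cp : 0 < L * (p / k) `^ (q / p) * t `^ q / q.
  by rewrite divr_gt0 ?mulr_gt0 ?powR_gt0 ?divr_gt0 //; lra.
move: hg; case: gp => [g| |] hg //=.
- rewrite lee_fin in hg.
  apply: (le_trans hD); rewrite -EFinM lee_fin.
  have G0 : 0 <= k / p * N `^ p by rewrite mulr_ge0 ?powR_ge0 // ltW // divr_gt0.
  have Hm : (k / p * N `^ p) `^ (q / p) <= g `^ (q / p).
    by rewrite ge0_ler_powR // ?divr_ge0 ?nnegrE //; try lra; apply: le_trans hg.
  have E1 : (k / p * N `^ p) `^ (q / p) = (k / p) `^ (q / p) * N `^ q.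
    rewrite powRM ?powR_ge0 // ?divr_ge0 //; try lra.
    by rewrite -powRrM (mulrC p) divfK //; apply/lt0r_neq0.
  have E2 : (p / k) `^ (q / p) * (k / p) `^ (q / p) = 1.
    rewrite -powRM ?divr_ge0 //; try lra.
    rewrite mulrA divfK ?divff; try by apply/lt0r_neq0.
    by rewrite powR1.
  rewrite E1 in Hm.
  have -> : L / q * (t `^ q * N `^ q) =
    L * (p / k) `^ (q / p) * t `^ q / q * ((k / p) `^ (q / p) * N `^ q).
    have -> : L * (p / k) `^ (q / p) * t `^ q / q * ((k / p) `^ (q / p) * N `^ q)
      = L / q * (t `^ q * N `^ q) * ((p / k) `^ (q / p) * (k / p) `^ (q / p)) by ring.
    by rewrite E2 mulr1.
  by rewrite ler_pM2l.
- by rewrite (negbTE qp0) gt0_muley ?lte_fin // leey.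
Qed.

Lemma gap_ge (R : realType) n (f Psi : 'rV[R]_n -> \bar R) x g s (fx a b : R) :
  f x = fx%:E -> Psi x = a%:E -> Psi s = b%:E ->
  ((dot g x - dot g s + a - b)%:E <= gap f Psi x g)%E.
Proof.
move=> Ef Ea Eb.
have H1 : ((dot g x - fx)%:E <= conj f g)%E.
  by apply: ereal_sup_ubound; exists x => //; rewrite Ef EFinB.
have H2 : ((- dot g s - b)%:E <= conj Psi (- g))%E.
  by apply: ereal_sup_ubound; exists s => //; rewrite Eb dotNl EFinB.
rewrite /gap; have := leeD (leeD (lexx (f x + Psi x)) H1) H2.
rewrite Ef Ea -!EFinD; apply: le_trans; rewrite lee_fin; lra.
Qed.

Lemma core (R : realType) n (f Psi : 'rV[R]_n -> \bar R) gradf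
  (nrm : 'rV[R]_n -> R) (q L p k : R)
  (hfc : convex_fun f) (hPsi : closed_proper_convex Psi)
  (A1 : forall x, dom Psi x -> is_gradient f x (gradf x))
  (hnrm : is_norm nrm) (hq : 1 < q) (hL : 0 < L)
  (hsmooth : unif_smooth nrm f (dom Psi) q L) (hp : 0 < p) (hk : 0 < k) x s t :
  dom Psi x -> lmo Psi (gradf x) s -> 0 <= t <= 1 ->
  ((k / p * nrm (s - x) `^ p)%:E <= gap f Psi x (gradf x))%E ->
  (Dcal f Psi gradf x s t <=
     (L * (p / k) `^ (q / p) * t `^ q / q)%:E * gap f Psi x (gradf x) `^ (q / p))%E.
Proof.
move=> hx [hs _] ht hg.
have /andP[t0 t1] := ht.
have [_ [[Pninf _] hPc]] := hPsi.
set y := x + t *: (s - x).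
have Exs : Psi x = (fine (Psi x))%:E := fin_real (Pninf x) hx.
have Ess : Psi s = (fine (Psi s))%:E := fin_real (Pninf s) hs.
have hcy := hPc x s t ht.
rewrite -/y Exs Ess -!EFinM -!EFinD in hcy.
have hy : dom Psi y := le_lt_trans hcy (ltry _).
have Eys : Psi y = (fine (Psi y))%:E := fin_real (Pninf y) hy.
rewrite Eys lee_fin in hcy.
have hLq : 0 <= L / q by rewrite divr_ge0 //; lra.
have hb := breg_le hnrm hfc A1 hLq hsmooth hx hy.
have Ny : nrm (y - x) = t * nrm (s - x).
  by rewrite /y addrC addKr nrmZ.
rewrite Ny in hb.
apply: (final_step hL hq hp hk t0 (@nrm_ge0 _ _ _ (s - x) hnrm)) hg.
have [gxn _] := A1 x hx.
have [gyn _] := A1 y hy.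
have Efx : f x = (fine (f x))%:E by rewrite fineK // (nbhs_singleton gxn).
have Efy : f y = (fine (f y))%:E by rewrite fineK // (nbhs_singleton gyn).
rewrite /Dcal /bregman -/y Efx Efy Exs Ess Eys -!EFinM -!EFinD lee_fin.
lra.
Qed.

Lemma gap_a (R : realType) n (f Psi : 'rV[R]_n -> \bar R) (g : 'rV[R]_n)
  (nrm : 'rV[R]_n -> R) (p mu : R) (hPsi : closed_proper_convex Psi)
  (hnrm : is_norm nrm) (hUC : unif_convex_fun nrm Psi (dom Psi) p mu)
  x s (fx : R) :
  f x = fx%:E -> dom Psi x -> lmo Psi g s ->
  ((mu / p * nrm (s - x) `^ p)%:E <= gap f Psi x g)%E.
Proof.
move=> Efx hx [hs hl].
have [_ [[Pninf _] _]] := hPsi.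
have Exs : Psi x = (fine (Psi x))%:E := fin_real (Pninf x) hx.
have Ess : Psi s = (fine (Psi s))%:E := fin_real (Pninf s) hs.
apply: le_trans (gap_ge _ Efx Exs Ess); rewrite lee_fin.
apply: lim1 => th /andP[th0 th1].
have hu := hUC s x hs hx th.
rewrite (ltW th0) (ltW th1) in hu; have {}hu := hu isT.
have hl' := hl (s + th *: (x - s)).
rewrite Ess Exs -!EFinM -!EFinD in hu.
rewrite Ess in hl'.
have Nxs : nrm (x - s) = nrm (s - x) by rewrite -opprB nrmN.
rewrite Nxs in hu.
move: hu hl'; case: (Psi (s + th *: (x - s))) => [w| |] hu hl' //=.
rewrite lee_fin in hu; rewrite -EFinD lee_fin in hl'.
rewrite dotD dotZ dotB in hl'.
set a := fine (Psi x) in hu *; set b := fine (Psi s) in hu hl' *.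
set c := mu / p * nrm (s - x) `^ p in hu *.
have : th * ((1 - th) * c) <= th * (dot g x - dot g s + a - b).
  have E : mu / p * th * (1 - th) * nrm (s - x) `^ p = th * ((1 - th) * c).
    by rewrite /c; ring.
  rewrite E in hu.
  lra.
by rewrite ler_pM2l.
Qed.

Lemma delta_dom (R : realType) n (C : set 'rV[R]_n) z :
  (delta_ind C z < +oo)%E -> C z.
Proof. by rewrite /delta_ind; case: (boolP (z \in C)) => [/set_mem|]. Qed.

Lemma delta_in (R : realType) n (C : set 'rV[R]_n) z :
  C z -> delta_ind C z = 0%:E.
Proof. by move=> Cz; rewrite /delta_ind mem_set. Qed.

Lemma gap_b (R : realType) n (f : 'rV[R]_n -> \bar R) (C : set 'rV[R]_n)
  (g : 'rV[R]_n) (nrm : 'rV[R]_n -> R) (p mu ell : R)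
  (hnrm : is_norm nrm) (hC : unif_convex_set nrm C p mu)
  (hmu : 0 < mu) (hp : 0 < p) x s (fx : R) :
  f x = fx%:E -> C x -> lmo (delta_ind C) g s -> ell <= dual_norm nrm g ->
  ((ell * mu / p * nrm (s - x) `^ p)%:E <= gap f (delta_ind C) x g)%E.
Proof.
move=> Efx Cx [hs hl] hell.
have Cs := delta_dom hs.
have Exs := delta_in Cx; have Ess := delta_in Cs.
apply: le_trans (gap_ge _ Efx Exs Ess); rewrite lee_fin subr0 addr0.
set A := dot g x - dot g s.
have A0 : 0 <= A.
  have := hl x; rewrite Exs Ess -!EFinD lee_fin !addr0 /A; lra.
set c := mu / p * nrm (s - x) `^ p.
have c0 : 0 <= c by rewrite /c mulr_ge0 ?powR_ge0 // divr_ge0 // ltW.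
have Nxs : nrm (x - s) = nrm (s - x) by rewrite -opprB nrmN.
have key : forall w, nrm w <= 1 -> c * dot g w <= A.
  move=> w hw; apply: lim1 => th /andP[th0 th1].
  have hb : 0 <= th <= 1 by rewrite (ltW th0) (ltW th1).
  have hw' : nrm (- w) <= 1 by rewrite nrmN.
  have Cz := hC s x th (- w) Cs Cx hb hw'.
  have := hl _ ; move=> /(_ (s + th *: (x - s) +
     (mu / p * th * (1 - th) * nrm (x - s) `^ p) *: - w)).
  rewrite (delta_in Cz) Ess -!EFinD lee_fin !addr0.
  rewrite !dotD !dotZ dotB dotN Nxs => hz.
  have E : mu / p * th * (1 - th) * nrm (s - x) `^ p = th * ((1 - th) * c).
    by rewrite /c; ring.
  rewrite E in hz.
  have : th * ((1 - th) * (c * dot g w)) <= th * A.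
    rewrite /A; nra.
  by rewrite ler_pM2l.
have -> : ell * mu / p * nrm (s - x) `^ p = ell * c by rewrite /c; ring.
have [cz|cp] := eqVneq c 0.
  by rewrite cz mulr0.
have cp' : 0 < c by rewrite lt0r cp c0.
have hsup : dual_norm nrm g <= A / c.
  apply: ge_sup.
    by exists (dot g 0), 0 => //=; rewrite /= nrm0.
  move=> _ [w hw <-]; rewrite ler_pdivlMr // mulrC; exact: key.
have : ell <= A / c by apply: le_trans hsup.
by rewrite ler_pdivlMr // mulrC.
Qed.

Unset Implicit Arguments.
Theorem proposition4 (R : realType) (n : nat)
  (f Psi : 'rV[R]_n -> \bar R) (gradf : 'rV[R]_n -> 'rV[R]_n)
  (hf : closed_proper_convex f) (hPsi : closed_proper_convex Psi)
  (A1 : forall x, dom Psi x -> is_gradient f x (gradf x))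
  (A2 : forall x, dom Psi x -> exists s, lmo Psi (gradf x) s)
  (nrm : 'rV[R]_n -> R) (hnrm : is_norm nrm)
  (q L : R) (hq : 1 < q <= 2) (hL : 0 < L)
  (hsmooth : unif_smooth nrm f (dom Psi) q L)
  (p mu : R) (hp : 2 <= p) (hmu : 0 < mu) :
  (unif_convex_fun nrm Psi (dom Psi) p mu ->
     growth_property f Psi gradf q (q / p) (L * (p / mu) `^ (q / p))) /\
  (forall C : set 'rV[R]_n, closed C -> cvx_set C ->
     Psi = delta_ind C -> unif_convex_set nrm C p mu ->
     let ell := inf [set dual_norm nrm (gradf x) | x in C] in
     0 < ell ->
     growth_property f Psi gradf q (q / p) (L * (p / (ell * mu)) `^ (q / p))).

Proof.
have [hq1 _] := andP hq.
have hp0 : 0 < p by lra.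
split.
- move=> hUC x hx s hs t ht.
  have [gxn _] := A1 x hx.
  have Efx : f x = (fine (f x))%:E by rewrite fineK // (nbhs_singleton gxn).
  apply: (core (k:=mu) hf.2.2 hPsi A1 hnrm hq1 hL hsmooth hp0 hmu hx hs ht).
  exact: (gap_a hPsi hnrm hUC Efx hx hs).
- move=> C _ _ EPsi hC ell ell0 x hx s hs t ht.
  have [gxn _] := A1 x hx.
  have Efx : f x = (fine (f x))%:E by rewrite fineK // (nbhs_singleton gxn).
  have ellmu : 0 < ell * mu by rewrite mulr_gt0.
  apply: (core (k:=ell * mu) hf.2.2 hPsi A1 hnrm hq1 hL hsmooth hp0 ellmu hx hs ht).
  rewrite EPsi in hx hs *.
  have Cx := delta_dom hx.
  apply: (gap_b hnrm hC hmu hp0 Efx Cx hs).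
  set S := [set dual_norm nrm (gradf x) | x in C].
  have hlb : has_lbound S.
    apply: contrapT => nlb.
    have : inf S = 0 by apply: inf_out => -[].
    rewrite -/ell => e0; lra.
  by apply: (ge_inf hlb); exists x.
Qed.
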